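(* Let $q,s\in\mathbb{H}$ with $qs\neq sq$ and $|q|<|s|$. Then $q\neq\bar s$ (so $s+q-2\,\mathrm{Re}[s]=q-\bar s\neq 0$), and the element $$S(s,q)=(s+q-2\,\mathrm{Re}[s])^{-1}(sq-|s|^2)-q=-(q-\bar s)^{-1}\big(q^2-2q\,\mathrm{Re}[s]+|s|^2\big)$$ (the two expressions being equal) is the two-sided inverse of $S^{-1}(s,q)=\sum_{n\ge0} q^n s^{-1-n}$; in particular it is a solution of $S^2+Sq-sS=0$.
   Context: $\mathbb{H}$ denotes the algebra of quaternions; $\bar s$ is the conjugate, $|s|^2=s\bar s$, $\mathrm{Re}[s]$ the real part. *)

(* Defs.v *)
From Stdlib Require Import Reals Lra.
Open Scope R_scope.

Record quat : Type := mkQ { qr : R; qi : R; qj : R; qk : R }.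

Definition qreal (a : R) : quat := mkQ a 0 0 0.
Definition q0 : quat := qreal 0.
Definition q1 : quat := qreal 1.

Definition qadd (x y : quat) : quat :=
  mkQ (qr x + qr y) (qi x + qi y) (qj x + qj y) (qk x + qk y).
Definition qopp (x : quat) : quat := mkQ (- qr x) (- qi x) (- qj x) (- qk x).
Definition qsub (x y : quat) : quat := qadd x (qopp y).

(* Hamilton product: i^2 = j^2 = k^2 = ijk = -1 *)
Definition qmul (x y : quat) : quat :=
  mkQ (qr x * qr y - qi x * qi y - qj x * qj y - qk x * qk y)
      (qr x * qi y + qi x * qr y + qj x * qk y - qk x * qj y)
      (qr x * qj y - qi x * qk y + qj x * qr y + qk x * qi y)
      (qr x * qk y + qi x * qj y - qj x * qi y + qk x * qr y).

Definition qconj (x : quat) : quat := mkQ (qr x) (- qi x) (- qj x) (- qk x).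
Definition qnorm2 (x : quat) : R := qr x ^ 2 + qi x ^ 2 + qj x ^ 2 + qk x ^ 2.
Definition qabs (x : quat) : R := sqrt (qnorm2 x).
Definition qre (x : quat) : R := qr x.
Definition qscale (a : R) (x : quat) : quat := mkQ (a * qr x) (a * qi x) (a * qj x) (a * qk x).
(* inverse x^{-1} = \bar x / |x|^2  (total; equals 0 at 0) *)
Definition qinv (x : quat) : quat := qscale (/ qnorm2 x) (qconj x).

Fixpoint qpow (x : quat) (n : nat) : quat :=
  match n with O => q1 | S m => qmul x (qpow x m) end.

Fixpoint qsum (f : nat -> quat) (N : nat) : quat :=
  match N with O => f O | S m => qadd (qsum f m) (f (S m)) end.

Definition quat_cv (u : nat -> quat) (l : quat) : Prop :=
  forall eps : R, eps > 0 -> exists N : nat, forall n : nat, (n >= N)%nat ->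
    qabs (qsub (u n) l) < eps.

Definition Sinv_partial (s q : quat) (N : nat) : quat :=
  qsum (fun n => qmul (qpow q n) (qpow (qinv s) (S n))) N.

(* Main.v *)
Require Import Defs.
From Stdlib Require Import Reals Lra Psatz.
Open Scope R_scope.

Lemma quat_ext x y : qr x = qr y -> qi x = qi y -> qj x = qj y -> qk x = qk y -> x = y.
Proof. destruct x, y; simpl; intros; subst; reflexivity. Qed.

Ltac qunf := unfold qsub, qadd, qopp, qmul, qconj, qscale, qinv, qreal, q0, q1, qnorm2, qre in *.
Ltac qeq := apply quat_ext; qunf; simpl.
Ltac fnz := repeat split; let E := fresh in intro E;
  first [ match goal with H : _ <> 0 |- _ => apply H; simpl; nra end ].

Definition Qe (q s : quat) : quat :=
  qadd (qsub (qmul q q) (qscale (2 * qre s) q)) (qreal (qnorm2 s)).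

Lemma qnorm2_nonneg x : 0 <= qnorm2 x.
Proof. unfold qnorm2; nra. Qed.

Lemma qnorm2_zero x : qnorm2 x = 0 -> x = q0.
Proof. unfold qnorm2; intro H. destruct x as [a b c d]; simpl in *.
  assert (a = 0) by nra. assert (b = 0) by nra. assert (c = 0) by nra. assert (d = 0) by nra.
  subst; reflexivity. Qed.

Lemma qnorm2_mul x y : qnorm2 (qmul x y) = qnorm2 x * qnorm2 y.
Proof. qunf; simpl; ring. Qed.

Lemma qnorm2_sub_le x y : qnorm2 (qsub x y) <= 2 * (qnorm2 x + qnorm2 y).
Proof. qunf; simpl.
  pose proof (pow2_ge_0 (qr x + qr y)). pose proof (pow2_ge_0 (qi x + qi y)).
  pose proof (pow2_ge_0 (qj x + qj y)). pose proof (pow2_ge_0 (qk x + qk y)). nra. Qed.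

Lemma qnorm2_pow x n : qnorm2 (qpow x n) = qnorm2 x ^ n.
Proof. induction n; simpl. unfold q1, qreal, qnorm2; simpl; ring.
  rewrite qnorm2_mul, IHn; ring. Qed.

Lemma qnorm2_inv x : qnorm2 x <> 0 -> qnorm2 (qinv x) = / qnorm2 x.
Proof. intro H. unfold qnorm2 in *. qunf; simpl. field. fnz. Qed.

Lemma qnorm2_conj x : qnorm2 (qconj x) = qnorm2 x.
Proof. qunf; simpl; ring. Qed.

Lemma qmul_assoc a b c : qmul (qmul a b) c = qmul a (qmul b c).
Proof. qeq; ring. Qed.

Lemma qpow_comm x n : qmul x (qpow x n) = qmul (qpow x n) x.
Proof. induction n; simpl. qeq; ring.
  rewrite IHn at 1. rewrite <- qmul_assoc, IHn. reflexivity. Qed.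

Lemma inv_cancel_l Qm X : qnorm2 Qm <> 0 -> qmul (qinv Qm) (qmul Qm X) = X.
Proof. intro H. qeq; field; fnz. Qed.

Lemma inv_l Qm : qnorm2 Qm <> 0 -> qmul (qinv Qm) Qm = q1.
Proof. intro H. qeq; field; fnz. Qed.

Lemma inv_pair a b : qnorm2 a <> 0 -> qnorm2 b <> 0 ->
  qmul (qopp (qmul (qinv a) b)) (qopp (qmul (qinv b) a)) = q1.
Proof. intros Ha Hb. qeq; field; fnz. Qed.

Lemma comm_inv a b : qmul a b = qmul b a -> qmul a (qinv b) = qmul (qinv b) a.
Proof. intro H.
  replace (qmul a (qinv b)) with (qscale (/ qnorm2 b) (qsub (qscale (2 * qr b) a) (qmul a b))) by (qeq; ring).
  replace (qmul (qinv b) a) with (qscale (/ qnorm2 b) (qsub (qscale (2 * qr b) a) (qmul b a))) by (qeq; ring).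
  rewrite H; reflexivity. Qed.

Lemma final_eq S L q s : qmul S L = q1 -> qmul L S = q1 -> qsub (qmul q L) (qmul L s) = qopp q1 ->
  qsub (qadd (qmul S S) (qmul S q)) (qmul s S) = q0.
Proof. intros H1 H2 H3.
  assert (X: qmul (qmul S (qsub (qmul q L) (qmul L s))) S = qsub (qmul (qmul S q) (qmul L S)) (qmul (qmul S L) (qmul s S))) by (qeq; ring).
  rewrite H1, H2, H3 in X.
  replace (qmul (qmul S (qopp q1)) S) with (qopp (qmul S S)) in X by (qeq; ring).
  replace (qmul (qmul S q) q1) with (qmul S q) in X by (qeq; ring).
  replace (qmul q1 (qmul s S)) with (qmul s S) in X by (qeq; ring).
  revert X. generalize (qmul S S) (qmul S q) (qmul s S). intros a b c X.
  pose proof (f_equal qr X); pose proof (f_equal qi X); pose proof (f_equal qj X); pose proof (f_equal qk X).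
  qeq; simpl in *; lra. Qed.

Lemma T_add q s X Y : qsub (qmul q (qadd X Y)) (qmul (qadd X Y) s) =
  qadd (qsub (qmul q X) (qmul X s)) (qsub (qmul q Y) (qmul Y s)).
Proof. qeq; ring. Qed.

Lemma step_id0 q s si A B : qmul si s = q1 ->
  qadd (qsub (qmul A B) q1)
   (qsub (qmul q (qmul A (qmul B si))) (qmul (qmul A (qmul B si)) s))
  = qsub (qmul (qmul q A) (qmul B si)) q1.
Proof. intro H.
  replace (qmul (qmul A (qmul B si)) s) with (qmul A (qmul B (qmul si s))) by (qeq; ring).
  rewrite H. qeq; ring. Qed.

Lemma step_id q s A B : qnorm2 s <> 0 ->
  qadd (qsub (qmul A B) q1)
   (qsub (qmul q (qmul A (qmul B (qinv s)))) (qmul (qmul A (qmul B (qinv s))) s))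
  = qsub (qmul (qmul q A) (qmul B (qinv s))) q1.
Proof. intro H. apply step_id0. apply inv_l; exact H. Qed.

Lemma telescope q s N : qnorm2 s <> 0 ->
  qsub (qmul q (Sinv_partial s q N)) (qmul (Sinv_partial s q N) s)
  = qsub (qmul (qpow q (S N)) (qpow (qinv s) (S N))) q1.
Proof. intro H. induction N.
  - unfold Sinv_partial; simpl. generalize (inv_l s H). generalize (qinv s). intros si Hsi.
    replace (qmul (qmul q1 (qmul si q1)) s) with (qmul si s) by (qeq; ring).
    rewrite Hsi. qeq; ring.
  - change (Sinv_partial s q (S N)) with
      (qadd (Sinv_partial s q N) (qmul (qpow q (S N)) (qpow (qinv s) (S (S N))))).
    rewrite T_add, IHN.
    change (qpow (qinv s) (S (S N))) with (qmul (qinv s) (qpow (qinv s) (S N))).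
    rewrite qpow_comm.
    change (qpow q (S (S N))) with (qmul q (qpow q (S N))).
    apply step_id; exact H.
Qed.

Lemma sylv_solve q s X C : qnorm2 (Qe q s) <> 0 ->
  qsub (qmul q X) (qmul X s) = C ->
  X = qmul (qinv (Qe q s)) (qsub (qmul q C) (qmul C (qconj s))).
Proof. intros H HC. transitivity (qmul (qinv (Qe q s)) (qmul (Qe q s) X)).
  symmetry; apply inv_cancel_l; exact H.
  f_equal. subst C. unfold Qe. qeq; ring. Qed.

Lemma diff_id Qi q s E :
  qsub (qmul Qi (qsub (qmul q (qsub E q1)) (qmul (qsub E q1) (qconj s))))
       (qopp (qmul Qi (qsub q (qconj s))))
  = qmul Qi (qsub (qmul q E) (qmul E (qconj s))).
Proof.
  assert (a1 : qsub (qmul q (qsub E q1)) (qmul (qsub E q1) (qconj s)) =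
    qsub (qsub (qmul q E) (qmul E (qconj s))) (qsub q (qconj s))) by (qeq; ring).
  rewrite a1. generalize (qsub (qmul q E) (qmul E (qconj s))) (qsub q (qconj s)).
  intros Y D. qeq; ring. Qed.

Lemma series_cv q s : qnorm2 q < qnorm2 s -> qnorm2 (Qe q s) <> 0 ->
  quat_cv (Sinv_partial s q) (qopp (qmul (qinv (Qe q s)) (qsub q (qconj s)))).
Proof.
  intros Hlt HQ eps Heps.
  assert (Hs : qnorm2 s <> 0) by (pose proof (qnorm2_nonneg q); lra).
  assert (Hsp : 0 < qnorm2 s) by (pose proof (qnorm2_nonneg q); lra).
  set (K := qnorm2 (qinv (Qe q s)) * 2 * (qnorm2 q + qnorm2 s)).
  assert (HK : 0 <= K) by (unfold K; pose proof (qnorm2_nonneg (qinv (Qe q s)));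
     pose proof (qnorm2_nonneg q); nra).
  set (x := qnorm2 q / qnorm2 s).
  assert (Hx0 : 0 <= x) by (unfold x; apply Rmult_le_pos; [apply qnorm2_nonneg|
     left; apply Rinv_0_lt_compat; exact Hsp]).
  assert (Hx1 : x < 1) by (unfold x; apply (Rmult_lt_reg_r (qnorm2 s)); auto;
     unfold Rdiv; rewrite Rmult_assoc, Rinv_l; lra).
  assert (Hy : 0 < eps * eps / (K + 1)) by
    (apply Rdiv_lt_0_compat; nra).
  destruct (pow_lt_1_zero x ltac:(rewrite Rabs_right; lra) _ Hy) as [N0 HN0].
  exists N0. intros n Hn.
  pose proof (HN0 (S n) ltac:(lia)) as Hxn. rewrite Rabs_right in Hxn by (apply Rle_ge, pow_le; lra).
  set (E := qmul (qpow q (S n)) (qpow (qinv s) (S n))).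
  assert (HP : Sinv_partial s q n = qmul (qinv (Qe q s)) (qsub (qmul q (qsub E q1)) (qmul (qsub E q1) (qconj s)))).
  { apply sylv_solve; auto. apply telescope; auto. }
  rewrite HP, diff_id.
  assert (HE : qnorm2 E = x ^ S n).
  { unfold E, x. rewrite qnorm2_mul, !qnorm2_pow, qnorm2_inv by auto.
    unfold Rdiv; rewrite Rpow_mult_distr; reflexivity. }
  assert (Hb : qnorm2 (qmul (qinv (Qe q s)) (qsub (qmul q E) (qmul E (qconj s)))) <= K * x ^ S n).
  { rewrite qnorm2_mul. unfold K.
    pose proof (qnorm2_sub_le (qmul q E) (qmul E (qconj s))).
    rewrite !qnorm2_mul, qnorm2_conj, HE in H.
    pose proof (qnorm2_nonneg (qinv (Qe q s))).
    apply Rle_trans with (qnorm2 (qinv (Qe q s)) * (2 * (qnorm2 q * x ^ S n + x ^ S n * qnorm2 s))).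
    apply Rmult_le_compat_l; auto. right; ring. }
  assert (Hlt2 : K * x ^ S n < eps * eps).
  { apply Rle_lt_trans with (K * (eps * eps / (K + 1))).
    apply Rmult_le_compat_l; lra.
    unfold Rdiv. apply (Rmult_lt_reg_r (K+1)); [lra|].
    rewrite Rmult_assoc, Rmult_assoc, Rinv_l by lra. nra. }
  unfold qabs. rewrite <- (sqrt_square eps) by lra.
  apply sqrt_lt_1_alt. split; [apply qnorm2_nonneg| lra].
Qed.

Lemma Qe_nz q s : qnorm2 q < qnorm2 s -> qnorm2 (Qe q s) <> 0.
Proof. intros Hlt H0. apply qnorm2_zero in H0.
  pose proof (f_equal qr H0) as Hr; pose proof (f_equal qi H0) as Hi;
  pose proof (f_equal qj H0) as Hj; pose proof (f_equal qk H0) as Hk.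
  unfold Qe in *; qunf; simpl in *.
  destruct q as [a b c d], s as [e f g h]; simpl in *.
  destruct (Req_dec (a - e) 0) as [He|He].
  - assert (a = e) by lra. subst e. nra.
  - assert (b = 0). { apply (Rmult_eq_reg_l (2*(a-e))); [|lra]. lra. }
    assert (c = 0). { apply (Rmult_eq_reg_l (2*(a-e))); [|lra]. lra. }
    assert (d = 0). { apply (Rmult_eq_reg_l (2*(a-e))); [|lra]. lra. }
    subst. assert (0 < (a-e)*(a-e)) by (apply Rsqr_pos_lt; exact He). nra.
Qed.

Lemma ident q s : qnorm2 (qsub q (qconj s)) <> 0 ->
  qsub (qmul (qinv (qsub q (qconj s))) (qsub (qmul s q) (qreal (qnorm2 s)))) q
  = qopp (qmul (qinv (qsub q (qconj s))) (Qe q s)).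
Proof. intro H.
  transitivity (qsub (qmul (qinv (qsub q (qconj s))) (qsub (qmul s q) (qreal (qnorm2 s))))
     (qmul (qinv (qsub q (qconj s))) (qmul (qsub q (qconj s)) q))).
  { rewrite inv_cancel_l by exact H. reflexivity. }
  assert (E : qsub (qsub (qmul s q) (qreal (qnorm2 s))) (qmul (qsub q (qconj s)) q) = qopp (Qe q s))
    by (unfold Qe; qeq; ring).
  generalize (qinv (qsub q (qconj s))) as di. intro di.
  transitivity (qmul di (qsub (qsub (qmul s q) (qreal (qnorm2 s))) (qmul (qsub q (qconj s)) q))).
  { generalize (qsub (qmul s q) (qreal (qnorm2 s))) (qmul (qsub q (qconj s)) q). intros X Y.
    qeq; ring. }
  rewrite E. generalize (Qe q s). intro Y. qeq; ring.
Qed.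

Lemma sylv_aux q Qi d s : qmul q Qi = qmul Qi q ->
  qsub (qmul q (qopp (qmul Qi d))) (qmul (qopp (qmul Qi d)) s) = qopp (qmul Qi (qsub (qmul q d) (qmul d s))).
Proof. intro H.
  replace (qmul q (qopp (qmul Qi d))) with (qopp (qmul (qmul q Qi) d)) by (qeq; ring).
  rewrite H. qeq; ring. Qed.

Lemma sylv_L q s : qnorm2 (Qe q s) <> 0 ->
  qsub (qmul q (qopp (qmul (qinv (Qe q s)) (qsub q (qconj s)))))
       (qmul (qopp (qmul (qinv (Qe q s)) (qsub q (qconj s)))) s) = qopp q1.
Proof. intro H. rewrite sylv_aux.
  - replace (qsub (qmul q (qsub q (qconj s))) (qmul (qsub q (qconj s)) s)) with (Qe q s)
      by (unfold Qe; qeq; ring).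
    rewrite inv_l by exact H. reflexivity.
  - apply comm_inv. unfold Qe. qeq; ring.
Qed.

Theorem theorem3p5 (q s : quat)
  (hnc : qmul q s <> qmul s q) (hlt : qabs q < qabs s) :
  q <> qconj s /\
  qsub (qadd s q) (qreal (2 * qre s)) <> q0 /\
  (* the two expressions for S(s,q) agree *)
  qsub (qmul (qinv (qsub (qadd s q) (qreal (2 * qre s))))
             (qsub (qmul s q) (qreal (qnorm2 s)))) q
  = qopp (qmul (qinv (qsub q (qconj s)))
               (qadd (qsub (qmul q q) (qscale (2 * qre s) q)) (qreal (qnorm2 s)))) /\
  (* S(s,q) is the two-sided inverse of the (convergent) series S^{-1}(s,q) *)
  exists L : quat,
    quat_cv (Sinv_partial s q) L /\
    (let Ssq := qsub (qmul (qinv (qsub (qadd s q) (qreal (2 * qre s))))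
                           (qsub (qmul s q) (qreal (qnorm2 s)))) q in
     qmul Ssq L = q1 /\ qmul L Ssq = q1 /\
     qsub (qadd (qmul Ssq Ssq) (qmul Ssq q)) (qmul s Ssq) = q0).
Proof.
  assert (Hlt : qnorm2 q < qnorm2 s) by (apply sqrt_lt_0_alt; exact hlt).
  assert (Hd : qsub (qadd s q) (qreal (2 * qre s)) = qsub q (qconj s)) by (qeq; ring).
  assert (Hne : q <> qconj s).
  { intro E. rewrite E, qnorm2_conj in Hlt. lra. }
  assert (Hnd : qnorm2 (qsub q (qconj s)) <> 0).
  { intro E. apply qnorm2_zero in E. apply Hne.
    pose proof (f_equal qr E); pose proof (f_equal qi E); pose proof (f_equal qj E); pose proof (f_equal qk E).
    qeq; simpl in *; lra. }
  assert (HQ := Qe_nz q s Hlt).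
  change (qadd (qsub (qmul q q) (qscale (2 * qre s) q)) (qreal (qnorm2 s))) with (Qe q s).
  rewrite Hd, ident by exact Hnd.
  split; [exact Hne|]. split.
  { intro E. apply Hnd. rewrite E. unfold qnorm2, q0, qreal; simpl; ring. }
  split; [reflexivity|].
  exists (qopp (qmul (qinv (Qe q s)) (qsub q (qconj s)))).
  split; [apply series_cv; auto|].
  cbv zeta.
  assert (H1 := inv_pair _ _ Hnd HQ).
  assert (H2 := inv_pair _ _ HQ Hnd).
  split; [exact H1|]. split; [exact H2|].
  apply (final_eq _ _ _ _ H1 H2). apply sylv_L; exact HQ.
Qed.
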